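(* Let $k\ge0$, $n\ge1$ be integers and fix $\psi>0$. The $3$-dimensional first-order linear system $$\frac{\mathrm d}{\mathrm d\varphi}\mathbf g=\frac1\varphi\begin{pmatrix}0 & 2e^{-\varphi^2+2\varphi\psi}\varphi^{2(k+1)} & 0\\ 0&0&1\\ 0 & -2(2n-1)\varphi\psi & -[4\varphi\psi+2(n-1)]\end{pmatrix}\mathbf g$$ is stabile, as $\varphi\to\infty$, for its solution $\mathbf g(\varphi)=\big(H^k_n(\varphi^2,\psi^2),\ v(\varphi),\ \theta_\varphi\bullet v(\varphi)\big)^{\mathsf T}$, where $v(\varphi)=e^{-2\varphi\psi}\,{}_0F_1(;n;\varphi^2\psi^2)$.
   Context: ${}_0F_1(;n;z)=\sum_{i\ge0} \frac{z^i}{(n)_i\, i!}$ with $(a)_i$ the Pochhammer symbol. $H^k_n(x,\lambda)=\int_0^x y^{k}e^{-y}\,{}_0F_1(;n;\lambda y)\,\mathrm{d}y$. $\theta_\varphi=\varphi\frac{\mathrm d}{\mathrm d\varphi}$. Stabile: Let a first-order linear system in a variable $t$ have $m$-dimensional solution space with basis $f_1,\dots,f_m$ (vector-valued), and let $f_i$ be a dominant solution as $t\to\infty$, i.e. $\|f_i(t)\|\ge\|f_j(t)\|$ for all $j$ for large $t$. The system is called stabile for a particular solution $f$ (as $t\to\infty$) if $\lim_{t\to\infty}\|f_i(t)\|/\|f(t)\|<\infty$ (finite); this does not depend on the chosen basis. *)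

(* Defs.v *)
From Stdlib Require Import Reals Arith ClassicalEpsilon.
Open Scope R_scope.

Fixpoint poch (a : R) (i : nat) : R :=
  match i with
  | O => 1
  | S j => poch a j * (a + INR j)
  end.

Definition F01_term (n z : R) (i : nat) : R := z ^ i / (poch n i * INR (fact i)).
Definition F01 (n z : R) : R :=
  epsilon (inhabits 0) (fun l => infinite_sum (F01_term n z) l).

Definition integral (f : R -> R) (a b : R) : R :=
  epsilon (inhabits 0) (fun l => exists pr : Riemann_integrable f a b, RiemannInt pr = l).

Definition Hkn (k : nat) (n : R) (x lam : R) : R :=
  integral (fun y => y ^ k * exp (- y) * F01 n (lam * y)) 0 x.

Definition deriv (f : R -> R) (x : R) : R :=
  epsilon (inhabits 0) (fun l => derivable_pt_lim f x l).
Definition theta (f : R -> R) (x : R) : R := x * deriv f x.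

Definition V3 : Type := (R * R * R)%type.
Definition c1 (u : V3) : R := fst (fst u).
Definition c2 (u : V3) : R := snd (fst u).
Definition c3 (u : V3) : R := snd u.
Definition norm3 (u : V3) : R := sqrt (c1 u ^ 2 + c2 u ^ 2 + c3 u ^ 2).
Definition lin3 (a b c : R) (u v w : V3) : V3 :=
  (a * c1 u + b * c1 v + c * c1 w,
   a * c2 u + b * c2 v + c * c2 w,
   a * c3 u + b * c3 v + c * c3 w).

Definition is_solution (A : R -> V3 -> V3) (f : R -> V3) : Prop :=
  forall t, 0 < t ->
    derivable_pt_lim (fun s => c1 (f s)) t (c1 (A t (f t))) /\
    derivable_pt_lim (fun s => c2 (f s)) t (c2 (A t (f t))) /\
    derivable_pt_lim (fun s => c3 (f s)) t (c3 (A t (f t))).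

Definition is_basis (A : R -> V3 -> V3) (fb : nat -> R -> V3) : Prop :=
  (forall i, (i < 3)%nat -> is_solution A (fb i)) /\
  (forall a b c, (forall t, 0 < t -> lin3 a b c (fb 0%nat t) (fb 1%nat t) (fb 2%nat t) = (0,0,0)) ->
     a = 0 /\ b = 0 /\ c = 0) /\
  (forall g, is_solution A g -> exists a b c,
     forall t, 0 < t -> g t = lin3 a b c (fb 0%nat t) (fb 1%nat t) (fb 2%nat t)).

Definition dominant (fb : nat -> R -> V3) (i : nat) : Prop :=
  exists T, forall t, T < t -> forall j, (j < 3)%nat -> norm3 (fb j t) <= norm3 (fb i t).

Definition finite_limit_at_infty (h : R -> R) : Prop :=
  exists L, forall eps, 0 < eps -> exists T, forall t, T < t -> Rabs (h t - L) < eps.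

Definition stabile (A : R -> V3 -> V3) (f : R -> V3) : Prop :=
  (exists fb i, is_basis A fb /\ (i < 3)%nat /\ dominant fb i) /\
  (forall fb i, is_basis A fb -> (i < 3)%nat -> dominant fb i ->
     finite_limit_at_infty (fun t => norm3 (fb i t) / norm3 (f t))).

Definition sysA (k n : nat) (psi : R) (phi : R) (g : V3) : V3 :=
  ( / phi * (2 * exp (- phi ^ 2 + 2 * phi * psi) * phi ^ (2 * (k + 1)) * c2 g),
    / phi * c3 g,
    / phi * (- 2 * (2 * INR n - 1) * phi * psi * c2 g
             - (4 * phi * psi + 2 * (INR n - 1)) * c3 g)).

Definition vfun (n : nat) (psi : R) (phi : R) : R :=
  exp (- 2 * phi * psi) * F01 (INR n) (phi ^ 2 * psi ^ 2).

Definition gsol (k n : nat) (psi : R) (phi : R) : V3 :=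
  (Hkn k (INR n) (phi ^ 2) (psi ^ 2), vfun n psi phi, theta (vfun n psi) phi).

(* Main.v *)
Require Import Defs.
From Coquelicot Require Import Coquelicot.
From Stdlib Require Import Reals Arith Lra Lia Psatz ClassicalEpsilon FunctionalExtensionality Classical.
Require Import Defs.
Open Scope R_scope.


Lemma dpl_of (f : R -> R) x l : is_derive f x l -> derivable_pt_lim f x l.
Proof. intro H; now apply is_derive_Reals. Qed.
Lemma of_dpl (f : R -> R) x l : derivable_pt_lim f x l -> is_derive f x l.
Proof. intro H; now apply is_derive_Reals. Qed.

Lemma is_derive_eq (f : R -> R) x l l' : is_derive f x l -> l = l' -> is_derive f x l'.
Proof. intros H ->; exact H. Qed.

Lemma noninc (f f' : R -> R) a b : a <= b ->
  (forall c, a <= c <= b -> derivable_pt_lim f c (f' c)) ->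
  (forall c, a <= c <= b -> f' c <= 0) -> f b <= f a.
Proof.
  intros hab hd hn. destruct (Rle_lt_or_eq_dec _ _ hab) as [h|h].
  - destruct (MVT_cor2 f f' a b h hd) as [c [e hc]].
    assert (f' c <= 0) by (apply hn; lra). nra.
  - subst; lra.
Qed.

Lemma continuous_pos (f : R -> R) :
  (forall s, 0 < s -> continuous f s) ->
  forall a t, 0 < a -> 0 < t -> is_derive (fun x => RInt f a x) t (f t).
Proof.
  intros hc a t ha ht. apply (is_derive_RInt f (fun x => RInt f a x) a t).
  - assert (hp : 0 < t/2) by lra.
    exists (mkposreal _ hp). intros y hy. apply (@RInt_correct R_CompleteNormedModule).
    apply ex_RInt_continuous. intros z hz. apply hc.
    unfold ball in hy; simpl in hy; unfold AbsRing_ball, abs, minus, plus, opp in hy; simpl in hy.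
    apply Rabs_def2 in hy. destruct hy.
    assert (0 < Rmin a y) by (apply Rmin_glb_lt; lra). lra.
  - apply hc; exact ht.
Qed.

Lemma continuous_all (f : R -> R) :
  (forall s, continuous f s) ->
  forall a t, is_derive (fun x => RInt f a x) t (f t).
Proof.
  intros hc a t. apply (is_derive_RInt f (fun x => RInt f a x) a t).
  - exists (mkposreal _ Rlt_0_1). intros y hy. apply (@RInt_correct R_CompleteNormedModule).
    apply ex_RInt_continuous. intros z hz. apply hc.
  - apply hc.
Qed.


Definition fa (p : R) (i : nat) : R := / (poch p i * INR (fact i)).

Lemma poch_pos p i : 0 < p -> 0 < poch p i.
Proof.
  intro hp; induction i; simpl. lra.
  apply Rmult_lt_0_compat; auto. pose proof (pos_INR i); lra.
Qed.

Lemma fa_pos p i : 0 < p -> 0 < fa p i.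
Proof.
  intro hp; unfold fa. apply Rinv_0_lt_compat, Rmult_lt_0_compat.
  now apply poch_pos. apply lt_0_INR, lt_O_fact.
Qed.

Lemma fa_S p i : 0 < p -> fa p (S i) = fa p i / ((p + INR i) * INR (S i)).
Proof.
  intro hp; unfold fa; simpl poch. rewrite fact_simpl, mult_INR.
  pose proof (poch_pos p i hp). pose proof (lt_0_INR _ (lt_O_fact i)).
  pose proof (pos_INR i). rewrite S_INR. field. repeat split; lra.
Qed.

Lemma fa_radius p : 1 <= p -> CV_radius (fa p) = p_infty.
Proof.
  intro hp1. assert (hp : 0 < p) by lra. apply CV_radius_infinite_DAlembert.
  - intro i; pose proof (fa_pos p i hp); lra.
  - apply is_lim_seq_le_le with (u := fun _ => 0) (w := fun i => / INR (S i)).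
    + intro i. rewrite fa_S by lra. pose proof (fa_pos p i hp).
      pose proof (pos_INR i). rewrite S_INR.
      replace (fa p i / ((p + INR i) * (INR i + 1)) / fa p i) with (/ ((p + INR i) * (INR i + 1))) by (field; repeat split; lra).
      rewrite Rabs_pos_eq.
      2: { left; apply Rinv_0_lt_compat; nra. }
      split. left; apply Rinv_0_lt_compat; nra.
      apply Rinv_le_contravar. lra.
      nra.
    + apply is_lim_seq_const.
    + apply (is_lim_seq_incr_1 (fun i => / INR i)).
      replace (Finite 0) with (Rbar_inv p_infty) by reflexivity.
      apply is_lim_seq_inv. apply is_lim_seq_INR. discriminate.
Qed.

Lemma fa_in p z : 1 <= p -> Rbar_lt (Rabs z) (CV_radius (fa p)).
Proof. intro hp; rewrite fa_radius by exact hp; exact I. Qed.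

Lemma F01_eq p z : 1 <= p -> F01 p z = PSeries (fa p) z.
Proof.
  intro hp. assert (hs : infinite_sum (F01_term p z) (PSeries (fa p) z)).
  { apply is_series_Reals. apply is_series_ext with (fun k => fa p k * z ^ k).
    - intro i; unfold F01_term, fa; simpl. unfold Rdiv. apply Rmult_comm.
    - apply is_pseries_R. apply (PSeries_correct (fa p) z). apply CV_radius_inside, fa_in, hp. }
  unfold F01. apply (uniqueness_sum (F01_term p z)); auto.
  apply (epsilon_spec (inhabits 0) (fun l => infinite_sum (F01_term p z) l)).
  exists (PSeries (fa p) z); exact hs.
Qed.

Lemma PS_ge1 (a : nat -> R) z : (forall i, 0 <= a i) -> a 0%nat = 1 -> 0 <= z ->
  Rbar_lt (Rabs z) (CV_radius a) -> 1 <= PSeries a z.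
Proof.
  intros ha h0 hz hr. unfold PSeries. rewrite Series_incr_1.
  2: { apply CV_radius_inside in hr. apply ex_pseries_R in hr. exact hr. }
  rewrite h0. simpl. assert (0 <= Series (fun k => a (S k) * (z * z ^ k))).
  { apply Rle_trans with (Series (fun _ => 0)).
    - replace (fun _ : nat => 0) with (fun k : nat => 0 * (fun _ : nat => 0) k).
      rewrite Series_scal_l; lra. apply FunctionalExtensionality.functional_extensionality; intro; ring.
    - apply Series_le. intro i; split; try lra. apply Rmult_le_pos; auto.
      exact (pow_le z (S i) hz).
      apply CV_radius_inside in hr. apply ex_pseries_R in hr. apply ex_series_incr_1 in hr. exact hr. }
  lra.
Qed.

Lemma F01_ge1 p z : 1 <= p -> 0 <= z -> 1 <= PSeries (fa p) z.
Proof.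
  intros hp hz. apply PS_ge1; auto.
  - intro i; left; apply fa_pos; lra.
  - unfold fa; simpl. field.
  - apply fa_in, hp.
Qed.

Definition F0 p z := PSeries (fa p) z.
Definition F1 p z := PSeries (PS_derive (fa p)) z.
Definition F2 p z := PSeries (PS_derive (PS_derive (fa p))) z.

Lemma F0_der p z : 1 <= p -> is_derive (F0 p) z (F1 p z).
Proof. intro hp; apply is_derive_PSeries, fa_in, hp. Qed.
Lemma F1_der p z : 1 <= p -> is_derive (F1 p) z (F2 p z).
Proof. intro hp; apply is_derive_PSeries. rewrite CV_radius_derive. apply fa_in, hp. Qed.

Lemma F_ode p z : 1 <= p -> z * F2 p z + p * F1 p z = F0 p z.
Proof.
  intro hp1. assert (hp : 0 < p) by lra. unfold F0, F1, F2.
  assert (e1 : ex_pseries (PS_derive (PS_derive (fa p))) z).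
  { apply CV_radius_inside. rewrite !CV_radius_derive. apply fa_in, hp1. }
  assert (e2 : ex_pseries (PS_derive (fa p)) z).
  { apply CV_radius_inside. rewrite !CV_radius_derive. apply fa_in, hp1. }
  rewrite <- PSeries_incr_1, <- PSeries_scal, <- PSeries_plus.
  2: apply ex_pseries_incr_1, e1.
  2: { apply ex_pseries_scal. apply Rmult_comm. exact e2. }
  apply PSeries_ext. intro i. unfold PS_plus, PS_scal, PS_incr_1, PS_derive.
  destruct i as [|i].
  - simpl. unfold zero, plus, scal; simpl. unfold mult; simpl.
    rewrite (fa_S p 0) by lra. simpl. field. lra.
  - change (INR (S i) * (INR (S (S i)) * fa p (S (S i))) + p * (INR (S (S i)) * fa p (S (S i))) = fa p (S i)).
    rewrite (fa_S p (S i)) by lra. rewrite !S_INR. pose proof (pos_INR i). pose proof (fa_pos p (S i) hp).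
    field. repeat split; lra.
Qed.

Lemma F0_cont p z : 1 <= p -> continuous (F0 p) z.
Proof. intro hp; apply (@ex_derive_continuous R_AbsRing R_NormedModule). eexists; apply F0_der, hp. Qed.


Definition wk (k : nat) (psi t : R) := 2 * exp (- t ^ 2 + 2 * t * psi) * t ^ (2 * k + 1).

Lemma sys1 k n psi t g : 0 < t -> c1 (sysA k n psi t g) = wk k psi t * c2 g.
Proof.
  intro ht; unfold sysA, c1, wk. replace (2 * (k + 1))%nat with (S (2 * k + 1)) by lia.
  rewrite <- (tech_pow_Rmult t (2 * k + 1)). unfold c2. cbn [fst snd]. field. lra.
Qed.
Lemma sys2 k n psi t g : 0 < t -> c2 (sysA k n psi t g) = c3 g / t.
Proof. intro ht; unfold sysA, c2; cbn [fst snd]. field. lra. Qed.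
Lemma sys3 k n psi t g : 0 < t -> c3 (sysA k n psi t g) =
  - 2 * (2 * INR n - 1) * psi * c2 g - (4 * psi + 2 * (INR n - 1) / t) * c3 g.
Proof. intro ht; unfold sysA, c3 at 1; cbn [fst snd]. field. lra. Qed.

Lemma sol_iff k n psi (g : R -> V3) :
  is_solution (sysA k n psi) g <->
  forall t, 0 < t ->
    derivable_pt_lim (fun s => c1 (g s)) t (wk k psi t * c2 (g t)) /\
    derivable_pt_lim (fun s => c2 (g s)) t (c3 (g t) / t) /\
    derivable_pt_lim (fun s => c3 (g s)) t
      (- 2 * (2 * INR n - 1) * psi * c2 (g t) - (4 * psi + 2 * (INR n - 1) / t) * c3 (g t)).
Proof.
  unfold is_solution; split; intros H t ht; specialize (H t ht);
  rewrite sys1, sys2, sys3 in * by exact ht; exact H.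
Qed.

Lemma mk_sol k n psi (G v dv ddv : R -> R) :
  (forall t, 0 < t -> is_derive G t (wk k psi t * v t)) ->
  (forall t, 0 < t -> is_derive v t (dv t)) ->
  (forall t, 0 < t -> is_derive dv t (ddv t)) ->
  (forall t, 0 < t -> ddv t + ((2 * INR n - 1) / t + 4 * psi) * dv t
                      + 2 * (2 * INR n - 1) * psi / t * v t = 0) ->
  is_solution (sysA k n psi) (fun t => (G t, v t, t * dv t)).
Proof.
  intros hG hv hdv hode. apply sol_iff. intros t ht. unfold c1, c2, c3; simpl.
  split; [|split].
  - apply dpl_of, hG, ht.
  - apply dpl_of. apply is_derive_eq with (dv t). apply hv, ht. change (dv t = t * dv t / t); field; lra.
  - apply dpl_of. eapply is_derive_eq.
    + apply (is_derive_mult (fun s => s) dv). apply is_derive_id. apply hdv, ht.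
      intros; apply Rmult_comm.
    + specialize (hode t ht). unfold plus, mult, one; simpl.
      apply Rmult_eq_reg_l with t; [|lra].
      replace (ddv t) with (ddv t + ((2 * INR n - 1) / t + 4 * psi) * dv t + 2 * (2 * INR n - 1) * psi / t * v t
         - (((2 * INR n - 1) / t + 4 * psi) * dv t + 2 * (2 * INR n - 1) * psi / t * v t)) by ring.
      rewrite hode. field. lra.
Qed.

Lemma dpl_eq (f : R -> R) x l l' : derivable_pt_lim f x l -> l = l' -> derivable_pt_lim f x l'.
Proof. intros H ->; exact H. Qed.

Lemma lin_der (f g h : R -> R) x l1 l2 l3 a b c :
  derivable_pt_lim f x l1 -> derivable_pt_lim g x l2 -> derivable_pt_lim h x l3 ->
  derivable_pt_lim (fun s => a * f s + b * g s + c * h s) x (a * l1 + b * l2 + c * l3).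
Proof.
  intros h1 h2 h3. apply derivable_pt_lim_plus with (f1 := fun s => a * f s + b * g s) (f2 := fun s => c * h s).
  apply derivable_pt_lim_plus with (f1 := fun s => a * f s) (f2 := fun s => b * g s).
  apply derivable_pt_lim_scal with (f := f); exact h1.
  apply derivable_pt_lim_scal with (f := g); exact h2.
  apply derivable_pt_lim_scal with (f := h); exact h3.
Qed.

Lemma lin_sol k n psi a b c f1 f2 f3 :
  is_solution (sysA k n psi) f1 -> is_solution (sysA k n psi) f2 -> is_solution (sysA k n psi) f3 ->
  is_solution (sysA k n psi) (fun t => lin3 a b c (f1 t) (f2 t) (f3 t)).
Proof.
  rewrite !sol_iff. intros h1 h2 h3 t ht.
  destruct (h1 t ht) as [a1 [a2 a3]]; destruct (h2 t ht) as [b1 [b2 b3]]; destruct (h3 t ht) as [d1 [d2 d3]].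
  unfold lin3, c1, c2, c3 in *; simpl in *.
  repeat split.
  - eapply dpl_eq. apply (lin_der _ _ _ t _ _ _ a b c a1 b1 d1). ring.
  - eapply dpl_eq. apply (lin_der _ _ _ t _ _ _ a b c a2 b2 d2). field. lra.
  - eapply dpl_eq. apply (lin_der _ _ _ t _ _ _ a b c a3 b3 d3). field. lra.
Qed.

Lemma const_sol k n psi M : is_solution (sysA k n psi) (fun _ => (M, 0, 0)).
Proof.
  apply sol_iff; intros t ht; unfold c1, c2, c3; simpl.
  repeat split; eapply dpl_eq; try (apply derivable_pt_lim_const); field; lra.
Qed.

Lemma bprod x y w W : 0 <= w <= W -> Rabs (2*x*w*y) <= W*(x^2+y^2).
Proof. intros hw. apply Rabs_le.
  assert (0 <= w*(x-y)^2) by (apply Rmult_le_pos; [lra|apply pow2_ge_0]).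
  assert (0 <= w*(x+y)^2) by (apply Rmult_le_pos; [lra|apply pow2_ge_0]).
  assert (0 <= (W-w)*(x^2+y^2)) by (apply Rmult_le_pos; [lra|pose proof (pow2_ge_0 x); pose proof (pow2_ge_0 y); lra]).
  split; nra. Qed.
Lemma bprod2 x y a A : Rabs a <= A -> Rabs (2*a*x*y) <= A*(x^2+y^2).
Proof. intros ha. apply Rabs_le. destruct (Rle_dec 0 a).
  rewrite Rabs_pos_eq in ha by lra.
  assert (0 <= a*(x-y)^2) by (apply Rmult_le_pos; [lra|apply pow2_ge_0]).
  assert (0 <= a*(x+y)^2) by (apply Rmult_le_pos; [lra|apply pow2_ge_0]).
  assert (0 <= (A-a)*(x^2+y^2)) by (apply Rmult_le_pos; [lra|pose proof (pow2_ge_0 x); pose proof (pow2_ge_0 y); lra]).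
  split; nra.
  rewrite Rabs_left in ha by lra.
  assert (0 <= -a*(x-y)^2) by (apply Rmult_le_pos; [lra|apply pow2_ge_0]).
  assert (0 <= -a*(x+y)^2) by (apply Rmult_le_pos; [lra|apply pow2_ge_0]).
  assert (0 <= (A+a)*(x^2+y^2)) by (apply Rmult_le_pos; [lra|pose proof (pow2_ge_0 x); pose proof (pow2_ge_0 y); lra]).
  split; nra. Qed.
Lemma key x y z w i a b W I A B : 0 <= w <= W -> 0 <= i <= I -> Rabs a <= A -> Rabs b <= B ->
  Rabs (2*x*w*y + 2*y*z*i + 2*z*(-a*y - b*z)) <= (W + I + A + 2*B)*(x^2+y^2+z^2).
Proof.
  intros hw hi ha hb.
  pose proof (bprod x y w W hw). pose proof (bprod y z i I hi). pose proof (bprod2 z y a A ha).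
  pose proof (bprod2 z z b B hb).
  assert (0 <= W) by lra. assert (0 <= I) by lra. assert (0 <= A) by (pose proof (Rabs_pos a); lra).
  assert (0<=B) by (pose proof (Rabs_pos b); lra).
  replace (2*x*w*y + 2*y*z*i + 2*z*(-a*y - b*z)) with (2*x*w*y + 2*y*i*z - 2*a*z*y - 2*b*z*z) by ring.
  eapply Rle_trans. apply Rabs_triang. eapply Rle_trans. apply Rplus_le_compat_l. rewrite Rabs_Ropp. apply H2.
  unfold Rminus. eapply Rle_trans. apply Rplus_le_compat_r. apply Rabs_triang.
  eapply Rle_trans. apply Rplus_le_compat_r. apply Rplus_le_compat_l. rewrite Rabs_Ropp. apply H1.
  eapply Rle_trans. apply Rplus_le_compat_r. apply Rplus_le_compat_r. apply Rabs_triang.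
  replace (2*y*i*z) with (2*y*i*z) by ring.
  assert (Rabs (2*y*i*z) <= I*(y^2+z^2)) by (replace (2*y*i*z) with (2*y*i*z) by ring; exact H0).
  nra.
Qed.

Lemma sq_der (f : R -> R) x l : derivable_pt_lim f x l -> derivable_pt_lim (fun s => f s ^ 2) x (2 * l * f x).
Proof.
  intro h. apply dpl_of. eapply is_derive_eq. apply is_derive_pow. apply of_dpl, h. simpl. ring.
Qed.

Definition En (g : R -> V3) s := c1 (g s) ^ 2 + c2 (g s) ^ 2 + c3 (g s) ^ 2.

Lemma En_der k n psi g t : is_solution (sysA k n psi) g -> 0 < t ->
  derivable_pt_lim (En g) t
   (2 * c1 (g t) * wk k psi t * c2 (g t) + 2 * c2 (g t) * c3 (g t) * / t
    + 2 * c3 (g t) * (- (2 * (2 * INR n - 1) * psi) * c2 (g t) - (4 * psi + 2 * (INR n - 1) / t) * c3 (g t))).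
Proof.
  intros hs ht. rewrite sol_iff in hs. destruct (hs t ht) as [d1 [d2 d3]].
  apply sq_der in d1, d2, d3. unfold En.
  eapply dpl_eq. apply derivable_pt_lim_plus. apply derivable_pt_lim_plus.
  exact d1. exact d2. exact d3. field. lra.
Qed.

Lemma En_nonneg g s : 0 <= En g s.
Proof. unfold En. pose proof (pow2_ge_0 (c1 (g s))). pose proof (pow2_ge_0 (c2 (g s))). pose proof (pow2_ge_0 (c3 (g s))). lra. Qed.

Lemma En_zero g s : En g s = 0 -> g s = (0, 0, 0).
Proof.
  unfold En, c1, c2, c3. destruct (g s) as [[a b] c]; simpl. intro h.
  pose proof (pow2_ge_0 a). pose proof (pow2_ge_0 b). pose proof (pow2_ge_0 c).
  assert (a ^ 2 = 0) by lra. assert (b ^ 2 = 0) by lra. assert (c ^ 2 = 0) by lra.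
  assert (a = 0) by nra. assert (b = 0) by nra. assert (c = 0) by nra.
  subst; reflexivity.
Qed.

Lemma exp_le_exp x y : x <= y -> exp x <= exp y.
Proof. intro h; destruct (Rle_lt_or_eq_dec _ _ h) as [h'|h']. left; apply exp_increasing, h'. subst; lra. Qed.

Lemma wk_bound k psi s hi : 0 < s <= hi -> 0 <= wk k psi s <= 2 * exp (psi ^ 2) * hi ^ (2 * k + 1).
Proof.
  intros hs. unfold wk. split.
  - pose proof (exp_pos (- s ^ 2 + 2 * s * psi)). pose proof (pow_lt s (2*k+1) (proj1 hs)). nra.
  - apply Rmult_le_compat. pose proof (exp_pos (- s ^ 2 + 2 * s * psi)); lra. left; apply pow_lt; lra.
    apply Rmult_le_compat_l. lra. apply exp_le_exp. pose proof (pow2_ge_0 (s - psi)). nra.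
    apply pow_incr. lra.
Qed.

Definition Ed k n psi (g : R -> V3) t :=
   2 * c1 (g t) * wk k psi t * c2 (g t) + 2 * c2 (g t) * c3 (g t) * / t
    + 2 * c3 (g t) * (- (2 * (2 * INR n - 1) * psi) * c2 (g t) - (4 * psi + 2 * (INR n - 1) / t) * c3 (g t)).

Lemma expK_der K s : derivable_pt_lim (fun s => exp (K * s)) s (K * exp (K * s)).
Proof. apply dpl_of. auto_derive. auto. ring. Qed.

Lemma uniq k n psi g : is_solution (sysA k n psi) g -> g 1 = (0,0,0) -> forall t, 0 < t -> g t = (0,0,0).
Proof.
  intros hs h1 t ht. apply En_zero.
  set (lo := Rmin t 1). set (hi := Rmax t 1).
  assert (hlo : 0 < lo) by (apply Rmin_glb_lt; lra).
  assert (hlt : lo <= t <= hi) by (split; [apply Rmin_l|apply Rmax_l]).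
  assert (hl1 : lo <= 1 <= hi) by (split; [apply Rmin_r|apply Rmax_r]).
  set (W := 2 * exp (psi ^ 2) * hi ^ (2 * k + 1)).
  set (A := Rabs (2 * (2 * INR n - 1) * psi)).
  set (B := Rabs (4 * psi) + Rabs (2 * (INR n - 1)) * / lo).
  set (K := W + / lo + A + 2 * B).
  assert (hb : forall s, lo <= s <= hi -> Rabs (Ed k n psi g s) <= K * En g s).
  { intros s hs'. unfold Ed, En, K. apply key.
    - apply wk_bound; lra.
    - split. left; apply Rinv_0_lt_compat; lra. apply Rinv_le_contravar; lra.
    - unfold A; lra.
    - unfold B. eapply Rle_trans. apply Rabs_triang. apply Rplus_le_compat_l.
      unfold Rdiv. rewrite Rabs_mult. apply Rmult_le_compat_l. apply Rabs_pos.
      rewrite Rabs_pos_eq by (left; apply Rinv_0_lt_compat; lra). apply Rinv_le_contravar; lra. }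
  assert (hE1 : En g 1 = 0) by (unfold En, c1, c2, c3; rewrite h1; simpl; ring).
  pose proof (En_nonneg g t) as hEt.
  destruct (Rle_dec 1 t) as [h|h].
  - assert (hf : En g t * exp (- K * t) <= En g 1 * exp (- K * 1)).
    { apply (noninc (fun s => En g s * exp (- K * s))
        (fun s => Ed k n psi g s * exp (- K * s) + En g s * (- K * exp (- K * s))) 1 t h).
      - intros c hc. apply (derivable_pt_lim_mult (En g) (fun s => exp (- K * s))). apply En_der; auto; lra. apply (expK_der (- K) c).
      - intros c hc. assert (hc' : lo <= c <= hi) by lra. specialize (hb c hc').
        pose proof (exp_pos (- K * c)). pose proof (Rle_abs (Ed k n psi g c)). nra. }
    rewrite hE1 in hf. pose proof (exp_pos (- K * t)). nra.
  - assert (hf : - (En g 1 * exp (K * 1)) <= - (En g t * exp (K * t))).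
    { apply (noninc (fun s => - (En g s * exp (K * s)))
        (fun s => - (Ed k n psi g s * exp (K * s) + En g s * (K * exp (K * s)))) t 1).
      lra.
      - intros c hc. apply (derivable_pt_lim_opp (fun s => En g s * exp (K * s))). apply (derivable_pt_lim_mult (En g) (fun s => exp (K * s))). apply En_der; auto; lra. apply (expK_der K c).
      - intros c hc. assert (hc' : lo <= c <= hi) by lra. specialize (hb c hc').
        pose proof (exp_pos (K * c)). pose proof (Rle_abs (- Ed k n psi g c)). rewrite Rabs_Ropp in H0. nra. }
    rewrite hE1 in hf. pose proof (exp_pos (K * t)). nra.
Qed.


Lemma neg_deriv_left (f : R -> R) m l a : derivable_pt_lim f m l -> l < 0 -> a < m ->
  exists s, a <= s < m /\ f m < f s.
Proof.
  intros hd hl ha. assert (he : 0 < - l / 2) by lra.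
  destruct (hd _ he) as [d hdd].
  set (h := - Rmin (d / 2) ((m - a) / 2)).
  assert (hpos : 0 < Rmin (d / 2) ((m - a) / 2)) by (apply Rmin_glb_lt; destruct d; simpl; lra).
  assert (hle1 : Rmin (d / 2) ((m - a) / 2) <= d / 2) by apply Rmin_l.
  assert (hle2 : Rmin (d / 2) ((m - a) / 2) <= (m - a) / 2) by apply Rmin_r.
  assert (hh : h <> 0) by (unfold h; lra).
  assert (hh2 : Rabs h < d) by (unfold h; rewrite Rabs_Ropp, Rabs_pos_eq by lra; destruct d; simpl in *; lra).
  specialize (hdd h hh hh2). apply Rabs_def2 in hdd. destruct hdd as [hd1 hd2].
  exists (m + h). split. unfold h; lra.
  assert (hneg : h < 0) by (unfold h; lra).
  assert ((f (m + h) - f m) / h < 0) by lra.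
  assert (f (m + h) - f m > 0).
  { destruct (Rle_dec (f (m + h) - f m) 0) as [hc|hc]; [|lra].
    exfalso. assert (0 <= (f (m + h) - f m) / h).
    { unfold Rdiv. assert (/ h < 0) by (apply Rinv_lt_0_compat; lra). nra. } lra. }
  lra.
Qed.

Lemma ev_small (f f' : R -> R) T d K : 0 < T -> 0 < K ->
  (forall t, T < t -> derivable_pt_lim f t (f' t)) ->
  (forall t, T < t -> d <= f t -> f' t <= - K / t) ->
  exists T', forall t, T' < t -> f t <= d.
Proof.
  intros hT hK hd hn.
  assert (hex : exists t1, T < t1 /\ f t1 < d).
  { apply NNPP. intro hno.
    assert (hall : forall t, T < t -> d <= f t).
    { intros t ht. apply Rnot_lt_le. intro hc. apply hno. exists t; auto. }
    set (t0 := T + 1).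
    set (X := (f t0 + K * ln t0 - d) / K + 1).
    set (t := Rmax (t0 + 1) (exp X)).
    assert (ht0 : t0 + 1 <= t) by apply Rmax_l.
    assert (htX : exp X <= t) by apply Rmax_r.
    assert (hlnt : X <= ln t).
    { rewrite <- (ln_exp X). destruct (Rle_lt_or_eq_dec _ _ htX) as [hh|hh].
      left; apply ln_increasing; auto; apply exp_pos. rewrite hh; lra. }
    assert (hm : f t + K * ln t <= f t0 + K * ln t0).
    { apply (noninc (fun s => f s + K * ln s) (fun s => f' s + K * / s)). unfold t0 in *; lra.
      - intros c hc. apply derivable_pt_lim_plus. apply hd; unfold t0 in *; lra.
        apply derivable_pt_lim_scal. apply derivable_pt_lim_ln. unfold t0 in *; lra.
      - intros c hc. assert (hc0 : T < c) by (unfold t0 in *; lra).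
        specialize (hn c hc0 (hall c hc0)). unfold Rdiv in hn. lra. }
    assert (hft : d <= f t) by (apply hall; unfold t0 in *; lra).
    assert (K * X <= K * ln t) by (apply Rmult_le_compat_l; lra).
    unfold X in H. replace (K * ((f t0 + K * ln t0 - d) / K + 1)) with (f t0 + K * ln t0 - d + K) in H by (field; lra).
    lra. }
  destruct hex as [t1 [ht1 hf1]]. exists t1. intros t ht.
  apply Rnot_lt_le. intro hc.
  destruct (continuity_ab_maj f t1 t) as [m [hmax hm]]. lra.
  { intros c hc'. apply derivable_continuous_pt. exists (f' c). apply hd. lra. }
  assert (hfm : f t <= f m) by (apply hmax; lra).
  destruct (Rle_lt_or_eq_dec _ _ (proj1 hm)) as [hm1|hm1].
  - assert (hl : f' m < 0).
    { assert (f' m <= - K / m) by (apply hn; lra). assert (0 < K / m) by (apply Rdiv_lt_0_compat; lra). lra. }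
    destruct (neg_deriv_left f m (f' m) t1) as [s [hs1 hs2]]; auto. apply hd; lra.
    assert (f s <= f m) by (apply hmax; lra). lra.
  - subst m. lra.
Qed.

Lemma inv_der s : 0 < s -> derivable_pt_lim (fun s => / s) s (- / s ^ 2).
Proof. intro hs. apply dpl_of. auto_derive. lra. field. lra. Qed.

Lemma abs_help u z b : 0 <= b -> u ^ 2 <= (b * z) ^ 2 -> u * z <= b * z ^ 2.
Proof.
  intros hb h. assert (hu : Rabs u <= b * Rabs z).
  { rewrite <- (Rabs_pos_eq b) by lra. rewrite <- Rabs_mult. apply Rsqr_le_abs_0. unfold Rsqr. nra. }
  pose proof (Rle_abs (u * z)). rewrite Rabs_mult in H.
  assert (Rabs z * Rabs z = z ^ 2) by (rewrite <- Rabs_mult; simpl; rewrite Rmult_1_r; apply Rabs_pos_eq; nra).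
  pose proof (Rabs_pos z). nra.
Qed.

Section Asym.
Variables (k n : nat) (psi : R) (g : R -> V3).
Hypothesis hn : (1 <= n)%nat.
Hypothesis hpsi : 0 < psi.
Hypothesis hs : is_solution (sysA k n psi) g.

Let a := 2 * (2 * INR n - 1) * psi.
Let b := 4 * psi.
Let c := 2 * (INR n - 1).
Let al := (2 * INR n - 1) / 2.
Let x t := c2 (g t).
Let y t := c3 (g t).

Lemma nge1 : 1 <= INR n.
Proof. apply (le_INR 1 n) in hn. simpl in hn. exact hn. Qed.

Lemma dx t : 0 < t -> derivable_pt_lim x t (y t / t).
Proof. intro ht. rewrite sol_iff in hs. apply (hs t ht). Qed.
Lemma dy t : 0 < t -> derivable_pt_lim y t (- a * x t - (b + c / t) * y t).
Proof. intro ht. rewrite sol_iff in hs. eapply dpl_eq. apply (hs t ht). unfold a, b, c, x, y. ring. Qed.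

Lemma step1 : exists C0, 0 <= C0 /\ forall t, 1 <= t -> a * x t ^ 2 <= C0 /\ y t ^ 2 <= C0 * t.
Proof.
  pose proof nge1 as hn1.
  set (E1 t := a * x t ^ 2 + y t ^ 2 * / t).
  assert (ha : 0 < a) by (unfold a; nra). assert (hb : 0 < b) by (unfold b; lra).
  assert (hc : 0 <= c) by (unfold c; lra).
  exists (E1 1). split.
  { unfold E1. pose proof (pow2_ge_0 (x 1)). pose proof (pow2_ge_0 (y 1)). rewrite Rinv_1. nra. }
  intros t ht.
  assert (hm : E1 t <= E1 1).
  { apply (noninc E1 (fun s => a * (2 * (y s / s) * x s) + (2 * (- a * x s - (b + c / s) * y s) * y s * / s + y s ^ 2 * (- / s ^ 2))) 1 t ht).
    - intros s hs'. unfold E1. apply derivable_pt_lim_plus.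
      apply derivable_pt_lim_scal. apply sq_der, dx. lra.
      apply (derivable_pt_lim_mult (fun s => y s ^ 2) (fun s => / s)). apply sq_der, dy; lra. apply inv_der; lra.
    - intros s hs'. assert (0 < s) by lra.
      replace (a * (2 * (y s / s) * x s) + (2 * (- a * x s - (b + c / s) * y s) * y s * / s + y s ^ 2 * (- / s ^ 2)))
        with (- (2 * b * s + 2 * c + 1) * (y s ^ 2 / s ^ 2)) by (field; lra).
      assert (0 <= y s ^ 2 / s ^ 2) by (apply Rdiv_le_0_compat; [apply pow2_ge_0| apply pow_lt; lra]).
      assert (0 <= 2 * b * s + 2 * c + 1) by nra. nra. }
  unfold E1 in *. split.
  - assert (0 <= y t ^ 2 * / t) by (apply Rmult_le_pos; [apply pow2_ge_0|left; apply Rinv_0_lt_compat; lra]).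
    lra.
  - assert (0 <= a * x t ^ 2) by (pose proof (pow2_ge_0 (x t)); nra).
    assert (y t ^ 2 * / t <= a * x 1 ^ 2 + y 1 ^ 2 * / 1) by lra.
    apply Rmult_le_compat_r with (r := t) in H0; [|lra].
    replace (y t ^ 2 * / t * t) with (y t ^ 2) in H0 by (field; lra). lra.
Qed.

Let z t := y t + al * x t.

Lemma hal : 1/2 <= al.
Proof. pose proof nge1. unfold al. lra. Qed.
Lemma ab_al : b * al = a.
Proof. unfold a, b, al. field. Qed.

Lemma dz t : 0 < t -> derivable_pt_lim z t (- b * z t + (al - c) * y t / t).
Proof.
  intro ht. unfold z. eapply dpl_eq. apply derivable_pt_lim_plus. apply dy, ht.
  apply derivable_pt_lim_scal. apply dx, ht.
  rewrite <- ab_al. field. lra.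
Qed.

Lemma step2 eps : 0 < eps -> exists T, forall t, T < t -> z t ^ 2 <= eps.
Proof.
  intro he. destruct step1 as [C0 [hC0 hC]].
  assert (hb : 0 < b) by (unfold b; lra).
  set (be := al - c).
  set (T := Rmax 1 (4 * be ^ 2 * C0 / (b ^ 2 * eps))).
  assert (hT1 : 1 <= T) by apply Rmax_l.
  assert (hT2 : 4 * be ^ 2 * C0 / (b ^ 2 * eps) <= T) by apply Rmax_r.
  apply (ev_small (fun t => z t ^ 2) (fun t => 2 * (- b * z t + be * y t / t) * z t) T eps (b * eps)).
  lra. nra.
  - intros t ht. apply sq_der, dz. lra.
  - intros t ht hz. assert (ht0 : 0 < t) by lra.
    destruct (hC t ltac:(lra)) as [_ hy].
    assert (hu : (2 * be * y t / t) ^ 2 <= (b * z t) ^ 2).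
    { replace ((2 * be * y t / t) ^ 2) with (4 * be ^ 2 * y t ^ 2 / t ^ 2) by (field; lra).
      assert (h1 : 4 * be ^ 2 * y t ^ 2 / t ^ 2 <= 4 * be ^ 2 * C0 / t).
      { unfold Rdiv. replace (4 * be ^ 2 * C0 * / t) with (4 * be ^ 2 * (C0 * t) * / t ^ 2) by (field; lra).
        apply Rmult_le_compat_r. left; apply Rinv_0_lt_compat, pow_lt; lra.
        apply Rmult_le_compat_l. pose proof (pow2_ge_0 be); lra. exact hy. }
      assert (h2 : 4 * be ^ 2 * C0 / t <= b ^ 2 * eps).
      { apply Rmult_le_reg_r with t. lra. replace (4 * be ^ 2 * C0 / t * t) with (4 * be ^ 2 * C0) by (field; lra).
        assert (4 * be ^ 2 * C0 / (b ^ 2 * eps) <= t) by lra.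
        apply Rmult_le_compat_r with (r := b ^ 2 * eps) in H; [|nra].
        replace (4 * be ^ 2 * C0 / (b ^ 2 * eps) * (b ^ 2 * eps)) with (4 * be ^ 2 * C0) in H by (field; nra).
        nra. }
      assert (b ^ 2 * eps <= (b * z t) ^ 2) by (rewrite Rpow_mult_distr; apply Rmult_le_compat_l; nra).
      lra. }
    pose proof (abs_help (2 * be * y t / t) (z t) b ltac:(lra) hu).
    assert (b * eps / t <= b * eps).
    { unfold Rdiv. rewrite <- (Rmult_1_r (b * eps)) at 2. apply Rmult_le_compat_l. nra.
      rewrite <- Rinv_1. apply Rinv_le_contravar; lra. }
    replace (2 * (- b * z t + be * y t / t) * z t) with (- 2 * b * z t ^ 2 + 2 * be * y t / t * z t) by (field; lra).
    nra.
Qed.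

Lemma step3 eps : 0 < eps -> exists T, forall t, T < t -> x t ^ 2 <= eps.
Proof.
  intro he. pose proof hal.
  destruct (step2 (al ^ 2 * eps / 4)) as [T1 hT1]. { assert (0 < al ^ 2) by (apply pow_lt; lra). apply Rdiv_lt_0_compat; [apply Rmult_lt_0_compat|]; lra. }
  apply (ev_small (fun t => x t ^ 2) (fun t => 2 * (y t / t) * x t) (Rmax 1 T1) eps (al * eps)).
  pose proof (Rmax_l 1 T1); lra. nra.
  - intros t ht. pose proof (Rmax_l 1 T1). apply sq_der, dx. lra.
  - intros t ht hx. pose proof (Rmax_l 1 T1). pose proof (Rmax_r 1 T1). assert (ht0 : 0 < t) by lra.
    specialize (hT1 t ltac:(lra)).
    assert (hu : (2 * z t) ^ 2 <= (al * x t) ^ 2).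
    { rewrite !Rpow_mult_distr. assert (al ^ 2 * eps <= al ^ 2 * x t ^ 2) by (apply Rmult_le_compat_l; nra). nra. }
    pose proof (abs_help (2 * z t) (x t) al ltac:(lra) hu).
    assert (hyz : y t = z t - al * x t) by (unfold z; ring).
    rewrite hyz. replace (2 * ((z t - al * x t) / t) * x t) with ((2 * z t * x t - 2 * al * x t ^ 2) / t) by (field; lra).
    unfold Rdiv. apply Rmult_le_compat_r. left; apply Rinv_0_lt_compat; lra. nra.
Qed.

Lemma sq_small_cv (f : R -> R) : (forall eps, 0 < eps -> exists T, forall t, T < t -> f t ^ 2 <= eps) ->
  forall eps, 0 < eps -> exists T, forall t, T < t -> Rabs (f t) < eps.
Proof.
  intros h eps he. destruct (h (eps ^ 2 / 2)) as [T hT]. nra. exists T. intros t ht.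
  specialize (hT t ht). rewrite <- (Rabs_pos_eq eps) by lra. apply Rsqr_lt_abs_0. unfold Rsqr. nra.
Qed.

Lemma asym_x : forall eps, 0 < eps -> exists T, forall t, T < t -> Rabs (x t) < eps.
Proof. apply sq_small_cv, step3. Qed.

Lemma asym_y : forall eps, 0 < eps -> exists T, forall t, T < t -> Rabs (y t) < eps.
Proof.
  apply sq_small_cv. intros eps he. pose proof hal.
  destruct (step2 (eps / 4)) as [T1 h1]. lra.
  destruct (step3 (eps / (4 * al ^ 2))) as [T2 h2]. apply Rdiv_lt_0_compat; nra.
  exists (Rmax T1 T2). intros t ht. pose proof (Rmax_l T1 T2). pose proof (Rmax_r T1 T2).
  specialize (h1 t ltac:(lra)). specialize (h2 t ltac:(lra)).
  assert (hyz : y t = z t - al * x t) by (unfold z; ring). rewrite hyz.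
  assert (al ^ 2 * x t ^ 2 <= eps / 4).
  { apply Rmult_le_compat_l with (r := al ^ 2) in h2; [|nra].
    replace (al ^ 2 * (eps / (4 * al ^ 2))) with (eps / 4) in h2 by (field; nra). exact h2. }
  pose proof (pow2_ge_0 (z t + al * x t)). nra.
Qed.

Lemma asym_xb : exists M, forall t, 1 <= t -> Rabs (x t) <= M.
Proof.
  destruct step1 as [C0 [hC0 hC]]. pose proof nge1.
  assert (ha : 0 < a) by (unfold a; nra).
  exists (1 + C0 / a). intros t ht. destruct (hC t ht) as [h _].
  assert (x t ^ 2 <= C0 / a) by (apply Rmult_le_reg_l with a; [lra|]; replace (a * (C0 / a)) with C0 by (field; lra); lra).
  assert (0 <= C0 / a) by (apply Rdiv_le_0_compat; lra).
  destruct (Rle_dec 0 (x t)); [rewrite Rabs_pos_eq by lra|rewrite Rabs_left by lra]; nra.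
Qed.

End Asym.


Definition cv (f : R -> R) (L : R) := forall eps, 0 < eps -> exists T, forall t, T < t -> Rabs (f t - L) < eps.

Lemma cv_is_lim f L : cv f L -> is_lim f p_infty L.
Proof.
  intro h. apply is_lim_spec. intros eps. destruct (h eps (cond_pos eps)) as [T hT].
  exists T. intros t ht. apply hT, ht.
Qed.

Lemma is_lim_cv f L : is_lim f p_infty (Finite L) -> cv f L.
Proof.
  intro h. apply is_lim_spec in h. intros eps he. destruct (h (mkposreal eps he)) as [T hT].
  exists T. intros t ht. apply (hT t ht).
Qed.

Lemma exp_pow x m : exp x ^ m = exp (INR m * x).
Proof.
  induction m. simpl. rewrite Rmult_0_l, exp_0. reflexivity.
  rewrite S_INR. simpl pow. rewrite IHm, <- exp_plus. f_equal. ring.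
Qed.

Lemma pow_exp_bound m t : 0 <= t -> (0 < m)%nat -> t ^ m <= INR m ^ m * exp t.
Proof.
  intros ht hm. assert (hm' : 0 < INR m) by (apply lt_0_INR; lia).
  assert (h1 : t <= INR m * exp (t / INR m)).
  { pose proof (exp_ineq1_le (t / INR m)).
    assert (t / INR m <= exp (t / INR m)) by (assert (0 <= t / INR m) by (apply Rdiv_le_0_compat; lra); lra).
    apply Rmult_le_compat_l with (r := INR m) in H0; [|lra].
    replace (INR m * (t / INR m)) with t in H0 by (field; lra). exact H0. }
  eapply Rle_trans. apply pow_incr. split. exact ht. exact h1.
  rewrite Rpow_mult_distr, exp_pow. right. f_equal. f_equal. field. lra.
Qed.

Lemma wk_decay k psi : 0 < psi -> forall t, 2 * psi + 2 <= t ->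
  0 <= wk k psi t <= 2 * INR (2 * k + 1) ^ (2 * k + 1) * exp (- t).
Proof.
  intros hp t ht. unfold wk. split.
  - pose proof (exp_pos (- t ^ 2 + 2 * t * psi)). pose proof (pow_lt t (2*k+1) ltac:(lra)). nra.
  - pose proof (pow_exp_bound (2 * k + 1) t ltac:(lra) ltac:(lia)).
    set (M := INR (2 * k + 1) ^ (2 * k + 1)) in *.
    assert (0 <= M) by (apply pow_le, pos_INR).
    apply Rle_trans with (2 * exp (- t ^ 2 + 2 * t * psi) * (M * exp t)).
    + apply Rmult_le_compat_l. pose proof (exp_pos (- t ^ 2 + 2 * t * psi)). lra. exact H.
    + replace (2 * exp (- t ^ 2 + 2 * t * psi) * (M * exp t)) with (2 * M * exp (- t ^ 2 + 2 * t * psi + t))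
        by (rewrite exp_plus; ring).
      apply Rmult_le_compat_l. lra. apply exp_le_exp. nra.
Qed.

Lemma expm_der s : derivable_pt_lim (fun s => exp (- s)) s (- exp (- s)).
Proof. apply dpl_of. auto_derive. auto. ring. Qed.

Lemma conv_exp (f f' : R -> R) T0 C : 0 <= C ->
  (forall t, T0 <= t -> derivable_pt_lim f t (f' t)) ->
  (forall t, T0 <= t -> Rabs (f' t) <= C * exp (- t)) ->
  exists L, cv f L.
Proof.
  intros hC hd hb.
  set (l t := f t - C * exp (- t)). set (u t := f t + C * exp (- t)).
  assert (hl : forall s t, T0 <= s <= t -> l s <= l t).
  { intros s t hst. assert (- l t <= - l s); [|lra].
    apply (noninc (fun t => - l t) (fun t => - (f' t - C * (- exp (- t)))) s t). lra.
    - intros c hc. unfold l. apply derivable_pt_lim_opp. apply derivable_pt_lim_minus. apply hd; lra.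
      apply derivable_pt_lim_scal. apply expm_der.
    - intros c hc. specialize (hb c ltac:(lra)). apply Rabs_le_between in hb. lra. }
  assert (hu : forall s t, T0 <= s <= t -> u t <= u s).
  { intros s t hst.
    apply (noninc u (fun t => f' t + C * (- exp (- t))) s t). lra.
    - intros c hc. unfold u. apply derivable_pt_lim_plus. apply hd; lra.
      apply derivable_pt_lim_scal. apply expm_der.
    - intros c hc. specialize (hb c ltac:(lra)). apply Rabs_le_between in hb. lra. }
  set (Ez v := exists t, T0 <= t /\ v = l t).
  assert (hbd : bound Ez).
  { exists (u T0). intros v [t [ht ->]]. apply Rle_trans with (u t).
    unfold l, u. pose proof (exp_pos (- t)). nra. apply hu; lra. }
  assert (hne : exists v, Ez v) by (exists (l T0); exists T0; split; [lra|reflexivity]).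
  destruct (completeness Ez hbd hne) as [L [hL1 hL2]].
  exists L. intros eps he.
  assert (hex : exists t0, T0 <= t0 /\ L - eps / 2 < l t0).
  { apply NNPP. intro hno. assert (L <= L - eps / 2); [|lra].
    apply hL2. intros v [t [ht ->]]. apply Rnot_lt_le. intro hc. apply hno. exists t; split; auto. }
  destruct hex as [t0 [ht0 hlt0]].
  exists (Rmax t0 (Rmax 0 (2 * C / eps))). intros t ht.
  pose proof (Rmax_l t0 (Rmax 0 (2 * C / eps))). pose proof (Rmax_r t0 (Rmax 0 (2 * C / eps))).
  pose proof (Rmax_l 0 (2 * C / eps)). pose proof (Rmax_r 0 (2 * C / eps)).
  assert (hlt : l t <= L) by (apply hL1; exists t; split; [lra|reflexivity]).
  assert (hl0 : l t0 <= l t) by (apply hl; lra).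
  assert (hexp : C * exp (- t) < eps / 2).
  { pose proof (exp_ineq1_le t). rewrite exp_Ropp. apply Rmult_lt_reg_r with (exp t). apply exp_pos.
    replace (C * / exp t * exp t) with C by (field; pose proof (exp_pos t); lra).
    assert (2 * C / eps < exp t) by lra.
    apply Rmult_lt_compat_r with (r := eps / 2) in H4; [|lra].
    replace (2 * C / eps * (eps / 2)) with C in H4 by (field; lra). lra. }
  assert (0 <= C * exp (- t)) by (pose proof (exp_pos (- t)); nra).
  unfold l in *. apply Rabs_def1; lra.
Qed.


Lemma sol_lim k n psi g : (1 <= n)%nat -> 0 < psi -> is_solution (sysA k n psi) g ->
  exists L, cv (fun t => c1 (g t)) L /\ cv (fun t => c2 (g t)) 0 /\ cv (fun t => c3 (g t)) 0.
Proof.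
  intros hn hp hs.
  destruct (asym_xb k n psi g hn hp hs) as [M hM].
  set (K := 2 * INR (2 * k + 1) ^ (2 * k + 1)).
  assert (hK : 0 <= K) by (unfold K; pose proof (pow_le (INR (2*k+1)) (2*k+1) (pos_INR _)); lra).
  assert (hM0 : 0 <= M) by (pose proof (hM 1 (Rle_refl 1)); pose proof (Rabs_pos (c2 (g 1))); lra).
  destruct (conv_exp (fun t => c1 (g t)) (fun t => wk k psi t * c2 (g t)) (Rmax 1 (2 * psi + 2)) (K * M))
    as [L hL].
  - nra.
  - intros t ht. pose proof (Rmax_l 1 (2 * psi + 2)). rewrite sol_iff in hs. apply (hs t). lra.
  - intros t ht. pose proof (Rmax_l 1 (2 * psi + 2)). pose proof (Rmax_r 1 (2 * psi + 2)).
    pose proof (wk_decay k psi hp t ltac:(lra)). fold K in H1.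
    specialize (hM t ltac:(lra)). rewrite Rabs_mult, (Rabs_pos_eq (wk k psi t)) by lra.
    pose proof (Rabs_pos (c2 (g t))). pose proof (exp_pos (- t)).
    apply Rle_trans with (K * exp (- t) * M). apply Rmult_le_compat; lra. nra.
  - exists L. split. exact hL. split.
    + intros eps he. destruct (asym_x k n psi g hn hp hs eps he) as [T hT]. exists T.
      intros t ht. rewrite Rminus_0_r. apply hT, ht.
    + intros eps he. destruct (asym_y k n psi g hn hp hs eps he) as [T hT]. exists T.
      intros t ht. rewrite Rminus_0_r. apply hT, ht.
Qed.

Lemma norm3_bounds u : Rabs (c1 u) <= norm3 u <= Rabs (c1 u) + Rabs (c2 u) + Rabs (c3 u).
Proof.
  unfold norm3. split.
  - rewrite <- sqrt_Rsqr_abs. apply sqrt_le_1_alt. unfold Rsqr.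
    pose proof (pow2_ge_0 (c2 u)). pose proof (pow2_ge_0 (c3 u)). simpl. nra.
  - rewrite <- (sqrt_pow2 (Rabs (c1 u) + Rabs (c2 u) + Rabs (c3 u))).
    apply sqrt_le_1_alt.
    pose proof (Rabs_pos (c1 u)). pose proof (Rabs_pos (c2 u)). pose proof (Rabs_pos (c3 u)).
    rewrite <- (pow2_abs (c1 u)), <- (pow2_abs (c2 u)), <- (pow2_abs (c3 u)). nra.
    pose proof (Rabs_pos (c1 u)). pose proof (Rabs_pos (c2 u)). pose proof (Rabs_pos (c3 u)). lra.
Qed.

Lemma norm_lim k n psi g : (1 <= n)%nat -> 0 < psi -> is_solution (sysA k n psi) g ->
  exists L, cv (fun t => norm3 (g t)) (Rabs L) /\ cv (fun t => c1 (g t)) L.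
Proof.
  intros hn hp hs. destruct (sol_lim k n psi g hn hp hs) as [L [h1 [h2 h3]]].
  exists L. split; [|exact h1]. intros eps he.
  destruct (h1 (eps/3) ltac:(lra)) as [T1 hT1]. destruct (h2 (eps/3) ltac:(lra)) as [T2 hT2].
  destruct (h3 (eps/3) ltac:(lra)) as [T3 hT3].
  exists (Rmax T1 (Rmax T2 T3)). intros t ht.
  pose proof (Rmax_l T1 (Rmax T2 T3)). pose proof (Rmax_r T1 (Rmax T2 T3)).
  pose proof (Rmax_l T2 T3). pose proof (Rmax_r T2 T3).
  specialize (hT1 t ltac:(lra)). specialize (hT2 t ltac:(lra)). specialize (hT3 t ltac:(lra)).
  rewrite Rminus_0_r in hT2, hT3.
  pose proof (norm3_bounds (g t)).
  pose proof (Rabs_triang_inv (c1 (g t)) L). pose proof (Rabs_triang_inv L (c1 (g t))).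
  rewrite Rabs_minus_sym in H5.
  apply Rabs_def1; lra.
Qed.


Section Sols.
Variables (k n : nat) (psi : R).
Hypothesis hn : (1 <= n)%nat.
Hypothesis hpsi : 0 < psi.

Let p := INR n.
Lemma hp1 : 1 <= p.
Proof. unfold p. apply (le_INR 1 n) in hn. simpl in hn. exact hn. Qed.

Definition v1 t := exp (- 2 * t * psi) * F0 p (t ^ 2 * psi ^ 2).
Definition dv1 t := exp (- 2 * t * psi) * (- 2 * psi * F0 p (t ^ 2 * psi ^ 2) + 2 * t * psi ^ 2 * F1 p (t ^ 2 * psi ^ 2)).
Definition ddv1 t := exp (- 2 * t * psi) * (4 * psi ^ 2 * F0 p (t ^ 2 * psi ^ 2) - 8 * t * psi ^ 3 * F1 p (t ^ 2 * psi ^ 2)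
   + 2 * psi ^ 2 * F1 p (t ^ 2 * psi ^ 2) + 4 * t ^ 2 * psi ^ 4 * F2 p (t ^ 2 * psi ^ 2)).

Lemma v1_der t : is_derive v1 t (dv1 t).
Proof.
  unfold v1, dv1. auto_derive.
  - exists (F1 p (t ^ 2 * psi ^ 2)). apply F0_der, hp1.
  - replace (t * (t * 1) * (psi * (psi * 1))) with (t ^ 2 * psi ^ 2) by ring.
    change (Derive (fun x : R => F0 p x)) with (Derive (F0 p)).
    rewrite (is_derive_unique _ _ _ (F0_der p (t ^ 2 * psi ^ 2) hp1)). ring.
Qed.

Lemma dv1_der t : is_derive dv1 t (ddv1 t).
Proof.
  unfold dv1, ddv1. auto_derive.
  - split. exists (F1 p (t ^ 2 * psi ^ 2)). apply F0_der, hp1.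
    split; auto. exists (F2 p (t ^ 2 * psi ^ 2)). apply F1_der, hp1.
  - replace (t * (t * 1) * (psi * (psi * 1))) with (t ^ 2 * psi ^ 2) by ring.
    change (Derive (fun x : R => F0 p x)) with (Derive (F0 p)).
    change (Derive (fun x : R => F1 p x)) with (Derive (F1 p)).
    rewrite (is_derive_unique _ _ _ (F0_der p (t ^ 2 * psi ^ 2) hp1)).
    rewrite (is_derive_unique _ _ _ (F1_der p (t ^ 2 * psi ^ 2) hp1)). ring.
Qed.

Lemma v1_ode t : 0 < t -> ddv1 t + ((2 * INR n - 1) / t + 4 * psi) * dv1 t
                      + 2 * (2 * INR n - 1) * psi / t * v1 t = 0.
Proof.
  intro ht. fold p. unfold v1, dv1, ddv1.
  pose proof (F_ode p (t ^ 2 * psi ^ 2) hp1) as h.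
  rewrite <- h. field. lra.
Qed.

Lemma v1_pos t : 0 < v1 t.
Proof.
  unfold v1. apply Rmult_lt_0_compat. apply exp_pos.
  pose proof (F01_ge1 p (t ^ 2 * psi ^ 2) hp1). unfold F0.
  assert (0 <= t ^ 2 * psi ^ 2) by (apply Rmult_le_pos; apply pow2_ge_0). lra.
Qed.

Lemma v1_cont t : continuous v1 t.
Proof. apply (@ex_derive_continuous R_AbsRing R_NormedModule). eexists; apply v1_der. Qed.

Definition hf y := y ^ k * exp (- y) * F0 p (psi ^ 2 * y).

Lemma hf_cont y : continuous hf y.
Proof.
  apply (@ex_derive_continuous R_AbsRing R_NormedModule). unfold hf. auto_derive.
  exists (F1 p (psi ^ 2 * y)). apply F0_der, hp1.
Qed.

Lemma Hkn_eq x : Hkn k (INR n) x (psi ^ 2) = RInt hf 0 x.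
Proof.
  unfold Hkn, integral.
  replace (fun y => y ^ k * exp (- y) * F01 (INR n) (psi ^ 2 * y)) with hf.
  2: { apply functional_extensionality; intro y. unfold hf. rewrite F01_eq by apply hp1. reflexivity. }
  assert (hex : ex_RInt hf 0 x) by (apply (@ex_RInt_continuous R_CompleteNormedModule); intros; apply hf_cont).
  pose proof (ex_RInt_Reals_0 _ _ _ hex) as pr.
  assert (hP : exists l, exists pr : Riemann_integrable hf 0 x, RiemannInt pr = l) by (exists (RiemannInt pr); exists pr; reflexivity).
  destruct (epsilon_spec (inhabits 0) (fun l => exists pr : Riemann_integrable hf 0 x, RiemannInt pr = l) hP) as [pr' e].
  rewrite <- e. symmetry. apply RInt_Reals.
Qed.

Lemma vfun_eq : vfun n psi = v1.
Proof.
  apply functional_extensionality; intro t. unfold vfun, v1. rewrite F01_eq by apply hp1. reflexivity.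
Qed.

Lemma deriv_v1 t : deriv (vfun n psi) t = dv1 t.
Proof.
  rewrite vfun_eq. unfold deriv.
  assert (h : derivable_pt_lim v1 t (dv1 t)) by (apply dpl_of, v1_der).
  apply (uniqueness_limite v1 t). 2: exact h.
  apply (epsilon_spec (inhabits 0) (fun l => derivable_pt_lim v1 t l)). exists (dv1 t); exact h.
Qed.

Lemma gsol_eq : gsol k n psi = fun t => (RInt hf 0 (t ^ 2), v1 t, t * dv1 t).
Proof.
  apply functional_extensionality; intro t. unfold gsol, theta.
  rewrite Hkn_eq, deriv_v1, vfun_eq. reflexivity.
Qed.

Lemma G1_aux t : 2 * t * hf (t ^ 2) = wk k psi t * v1 t.
Proof.
  unfold hf, wk, v1.
  replace (psi ^ 2 * t ^ 2) with (t ^ 2 * psi ^ 2) by ring.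
  replace (- t ^ 2) with (- t ^ 2 + 2 * t * psi + - 2 * t * psi) at 1 by ring.
  rewrite (exp_plus (- t ^ 2 + 2 * t * psi)). rewrite <- pow_mult. replace (2 * k + 1)%nat with (S (2 * k)) by lia.
  rewrite <- (tech_pow_Rmult t (2 * k)). ring.
Qed.

Lemma G1_der t : is_derive (fun t => RInt hf 0 (t ^ 2)) t (wk k psi t * v1 t).
Proof.
  eapply is_derive_eq. apply (is_derive_comp (fun x => RInt hf 0 x) (fun t => t ^ 2)).
  apply continuous_all, hf_cont. apply is_derive_eq with (2 * t).
  auto_derive; auto; ring. reflexivity.
  apply G1_aux.
Qed.

Lemma gsol_sol : is_solution (sysA k n psi) (gsol k n psi).
Proof.
  rewrite gsol_eq. apply mk_sol with (ddv := ddv1).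
  - intros t _. apply G1_der.
  - intros t _. apply v1_der.
  - intros t _. apply dv1_der.
  - apply v1_ode.
Qed.

Definition Wr s := exp (- 4 * psi * s - (2 * INR n - 1) * ln s).
Definition dWr s := - 4 * psi * Wr s - (2 * INR n - 1) * Wr s / s.

Lemma Wr_der s : 0 < s -> is_derive Wr s (dWr s).
Proof.
  intro hs. unfold dWr, Wr. auto_derive. exact hs. unfold Rminus. field. lra.
Qed.

Definition qf s := Wr s / v1 s ^ 2.

Lemma qf_cont s : 0 < s -> continuous qf s.
Proof.
  intro hs. apply (@ex_derive_continuous R_AbsRing R_NormedModule). unfold qf. auto_derive.
  repeat split.
  - eexists; apply Wr_der, hs.
  - eexists; apply v1_der.
  - pose proof (v1_pos s). apply Rmult_integral_contrapositive_currified; nra.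
Qed.

Definition Q t := RInt qf 1 t.
Definition v2 t := v1 t * Q t.
Definition dv2 t := dv1 t * Q t + Wr t / v1 t.
Definition ddv2 t := ddv1 t * Q t + dWr t / v1 t.

Lemma Q_der t : 0 < t -> is_derive Q t (qf t).
Proof. intro ht. apply (continuous_pos qf qf_cont 1 t); lra. Qed.

Lemma v2_der t : 0 < t -> is_derive v2 t (dv2 t).
Proof.
  intro ht. unfold v2, dv2. eapply is_derive_eq.
  apply (is_derive_mult v1 Q). apply v1_der. apply Q_der, ht. intros; apply Rmult_comm.
  unfold plus, mult; simpl. unfold qf. pose proof (v1_pos t). field. lra.
Qed.

Lemma dv2_der t : 0 < t -> is_derive dv2 t (ddv2 t).
Proof.
  intro ht. unfold dv2, ddv2. pose proof (v1_pos t).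
  eapply is_derive_eq.
  apply (@is_derive_plus R_AbsRing R_NormedModule (fun t => dv1 t * Q t) (fun t => Wr t / v1 t)).
  apply (is_derive_mult dv1 Q). apply dv1_der. apply Q_der, ht. intros; apply Rmult_comm.
  apply (is_derive_div Wr v1). apply Wr_der, ht. apply v1_der. lra.
  unfold plus, mult; simpl. unfold qf. field. lra.
Qed.

Lemma v2_ode t : 0 < t -> ddv2 t + ((2 * INR n - 1) / t + 4 * psi) * dv2 t
                      + 2 * (2 * INR n - 1) * psi / t * v2 t = 0.
Proof.
  intro ht. pose proof (v1_ode t ht) as h. pose proof (v1_pos t).
  unfold ddv2, dv2, v2, dWr.
  replace (ddv1 t * Q t + (- 4 * psi * Wr t - (2 * INR n - 1) * Wr t / t) / v1 t +
    ((2 * INR n - 1) / t + 4 * psi) * (dv1 t * Q t + Wr t / v1 t) +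
    2 * (2 * INR n - 1) * psi / t * (v1 t * Q t))
  with (Q t * (ddv1 t + ((2 * INR n - 1) / t + 4 * psi) * dv1 t + 2 * (2 * INR n - 1) * psi / t * v1 t))
  by (field; lra).
  rewrite h. ring.
Qed.

Definition G2 t := RInt (fun s => wk k psi s * v2 s) 1 t.

Lemma G2_der t : 0 < t -> is_derive G2 t (wk k psi t * v2 t).
Proof.
  intro ht. apply (continuous_pos (fun s => wk k psi s * v2 s)); try lra.
  intros s hs. apply (@ex_derive_continuous R_AbsRing R_NormedModule).
  exists (2 * (exp (- s ^ 2 + 2 * s * psi) * (- 2 * s + 2 * psi)) * s ^ (2 * k + 1) * v2 s
     + 2 * exp (- s ^ 2 + 2 * s * psi) * (INR (2 * k + 1) * s ^ pred (2 * k + 1)) * v2 s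
     + wk k psi s * dv2 s).
  apply (is_derive_ext (fun s => (2 * exp (- s ^ 2 + 2 * s * psi) * s ^ (2 * k + 1)) * v2 s)).
  intro; reflexivity.
  eapply is_derive_eq. apply (is_derive_mult (fun s => 2 * exp (- s ^ 2 + 2 * s * psi) * s ^ (2 * k + 1)) v2).
  auto_derive; [auto | reflexivity]. apply v2_der, hs. intros; apply Rmult_comm.
  unfold plus, mult, wk; simpl. ring.
Qed.

Definition e3 t : V3 := (G2 t, v2 t, t * dv2 t).

Lemma e3_sol : is_solution (sysA k n psi) e3.
Proof.
  apply mk_sol with (ddv := ddv2).
  - apply G2_der.
  - apply v2_der.
  - apply dv2_der.
  - apply v2_ode.
Qed.

Lemma Q1 : Q 1 = 0.
Proof. unfold Q. rewrite RInt_point. reflexivity. Qed.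
Lemma G21 : G2 1 = 0.
Proof. unfold G2. rewrite RInt_point. reflexivity. Qed.
Lemma v21 : v2 1 = 0.
Proof. unfold v2. rewrite Q1. ring. Qed.
Lemma dv21 : 0 < dv2 1.
Proof.
  unfold dv2. rewrite Q1. rewrite Rmult_0_r, Rplus_0_l.
  apply Rdiv_lt_0_compat. apply exp_pos. apply v1_pos.
Qed.

End Sols.


Lemma V3_eq (u : V3) : u = (c1 u, c2 u, c3 u).
Proof. destruct u as [[a b] c]; reflexivity. Qed.

Lemma lin3_zero u v : lin3 1 (-1) 0 u v u = (0,0,0) -> u = v.
Proof.
  destruct u as [[a b] c], v as [[d e] f]; unfold lin3, c1, c2, c3; simpl; intro h.
  injection h; intros. f_equal; [f_equal|]; lra.
Qed.

Lemma Hpos k n psi : (1 <= n)%nat -> 0 < RInt (hf k n psi) 0 1.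
Proof.
  intro hn. assert (hp : 1 <= INR n) by (apply (le_INR 1 n) in hn; simpl in hn; exact hn).
  destruct (MVT_cor2 (fun x => RInt (hf k n psi) 0 x) (hf k n psi) 0 1) as [c [hc1 hc2]]. lra.
  { intros c _. apply dpl_of, continuous_all, hf_cont, hn. }
  rewrite RInt_point in hc1. change (zero : R) with 0 in hc1.
  assert (0 < hf k n psi c).
  { unfold hf. apply Rmult_lt_0_compat. apply Rmult_lt_0_compat. apply pow_lt; lra. apply exp_pos.
    pose proof (F01_ge1 (INR n) (psi ^ 2 * c) hp). unfold F0.
    assert (0 <= psi ^ 2 * c) by (apply Rmult_le_pos; [apply pow2_ge_0|lra]). specialize (H H0). lra. }
  nra.
Qed.

Lemma Lg_pos k n psi Lg : (1 <= n)%nat -> 0 < psi ->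
  cv (fun t => c1 (gsol k n psi t)) Lg -> 0 < Lg.
Proof.
  intros hn hp hcv. rewrite gsol_eq in hcv by exact hn. unfold c1 in hcv; cbn [fst snd] in hcv.
  set (G t := RInt (hf k n psi) 0 (t ^ 2)) in *.
  assert (hG1 : G 1 = RInt (hf k n psi) 0 1) by (unfold G; f_equal; ring).
  pose proof (Hpos k n psi hn).
  assert (hmono : forall t, 1 <= t -> G 1 <= G t).
  { intros t ht. assert (- G t <= - G 1); [|lra].
    apply (noninc (fun t => - G t) (fun t => - (wk k psi t * v1 n psi t)) 1 t ht).
    - intros c hc. apply derivable_pt_lim_opp. apply dpl_of, G1_der, hn.
    - intros c hc. destruct (wk_bound k psi c c ltac:(lra)) as [hw _]. pose proof (v1_pos n psi hn c). nra. }
  apply NNPP. intro hneg. destruct (hcv (G 1 - Lg)) as [T hT]. lra.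
  specialize (hT (Rmax T 1 + 1) ltac:(pose proof (Rmax_l T 1); lra)).
  specialize (hmono (Rmax T 1 + 1) ltac:(pose proof (Rmax_r T 1); lra)).
  cbv beta in hT. apply Rabs_def2 in hT. destruct hT. lra.
Qed.

Theorem theorem5 (k n : nat) (hn : (1 <= n)%nat) (psi : R) (hpsi : 0 < psi) :
  stabile (sysA k n psi) (gsol k n psi).
Proof.
  pose proof (gsol_sol k n psi hn) as hgs. pose proof (e3_sol k n psi hn) as he3.
  destruct (norm_lim k n psi _ hn hpsi hgs) as [Lg [hng hcg]].
  pose proof (Lg_pos k n psi Lg hn hpsi hcg) as hLg.
  split.
  - destruct (norm_lim k n psi _ hn hpsi he3) as [L3 [hn3 _]].
    set (M := Rabs Lg + Rabs L3 + 1).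
    assert (hM : 0 < M) by (unfold M; pose proof (Rabs_pos Lg); pose proof (Rabs_pos L3); lra).
    set (fb := fun i : nat => match i with 0%nat => (fun _ : R => (M, 0, 0) : V3) | 1%nat => gsol k n psi | _ => e3 k n psi end).
    exists fb, 0%nat. split; [|split; [lia|]].
    + split; [|split].
      * intros i hi. destruct i as [|[|[|i]]]; simpl. apply const_sol. exact hgs. exact he3. lia.
      * intros a b c hz. specialize (hz 1 Rlt_0_1). simpl in hz.
        rewrite gsol_eq in hz by exact hn. unfold e3, lin3, c1, c2, c3 in hz. simpl in hz.
        rewrite v21, G21 in hz. pose proof (v1_pos n psi hn 1). pose proof (dv21 n psi hn).
        injection hz as h1 h2 h3.
        assert (hb0 : b * v1 n psi 1 = 0) by lra.
        apply Rmult_integral in hb0. destruct hb0 as [hb0|hb0]; [|lra]. subst b.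
        assert (hc0 : c * (1 * dv2 n psi 1) = 0) by lra.
        apply Rmult_integral in hc0. destruct hc0 as [hc0|hc0]; [|lra]. subst c.
        assert (ha0 : a * M = 0) by lra.
        apply Rmult_integral in ha0. destruct ha0 as [ha0|ha0]; [|lra]. subst a. auto.
      * intros g hg.
        set (G1 := RInt (hf k n psi) 0 (1 ^ 2)).
        set (b := c2 (g 1) / v1 n psi 1).
        set (c := (c3 (g 1) - b * (1 * dv1 n psi 1)) / (1 * dv2 n psi 1)).
        set (a := (c1 (g 1) - b * G1 - c * G2 k n psi 1) / M).
        exists a, b, c.
        set (h := fun t => lin3 a b c (fb 0%nat t) (fb 1%nat t) (fb 2%nat t)).
        assert (hh : is_solution (sysA k n psi) h) by (apply lin_sol; [apply const_sol|exact hgs|exact he3]).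
        assert (hd : is_solution (sysA k n psi) (fun t => lin3 1 (-1) 0 (g t) (h t) (g t))) by (apply lin_sol; auto).
        assert (hd1 : lin3 1 (-1) 0 (g 1) (h 1) (g 1) = (0, 0, 0)).
        { unfold h, fb. rewrite gsol_eq by exact hn. unfold e3, lin3, c1, c2, c3. simpl.
          rewrite v21, G21. pose proof (v1_pos n psi hn 1). pose proof (dv21 n psi hn).
          unfold a, b, c, G1. unfold c1, c2, c3. f_equal. f_equal. all: unfold b; rewrite ?G21; change (1 * (1 * 1)) with (1 ^ 2); unfold c1, c2, c3; field; repeat split; lra. }
        intros t ht. apply lin3_zero. exact (uniq k n psi _ hd hd1 t ht).
    + destruct (hng 1 Rlt_0_1) as [T1 hT1]. destruct (hn3 1 Rlt_0_1) as [T2 hT2].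
      exists (Rmax T1 T2). intros t ht j hj.
      pose proof (Rmax_l T1 T2). pose proof (Rmax_r T1 T2).
      assert (hn0 : norm3 (fb 0%nat t) = M).
      { unfold fb, norm3, c1, c2, c3; simpl. replace (M * (M * 1) + 0 * (0 * 1) + 0 * (0 * 1)) with (M ^ 2) by ring.
        apply sqrt_pow2; lra. }
      rewrite hn0. destruct j as [|[|[|j]]].
      * lra.
      * specialize (hT1 t ltac:(lra)). apply Rabs_def2 in hT1. simpl. pose proof (Rabs_pos L3). unfold M. lra.
      * specialize (hT2 t ltac:(lra)). apply Rabs_def2 in hT2. simpl. pose proof (Rabs_pos Lg). unfold M. lra.
      * lia.
  - intros fb i hb hi hdom. destruct hb as [hsol _].
    destruct (norm_lim k n psi _ hn hpsi (hsol i hi)) as [Li [hni _]].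
    exists (Rabs Li / Rabs Lg). apply is_lim_cv.
    assert (hne : Rabs Lg <> 0) by (rewrite Rabs_pos_eq; lra).
    pose proof (is_lim_div _ _ p_infty _ _ (cv_is_lim _ _ hni) (cv_is_lim _ _ hng)) as hl.
    simpl in hl. apply hl. intro hc. injection hc. exact hne. exact I.
Qed.
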